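(* Let $\mathcal{S}$ be a semifilter. Then the subspace $(2^\omega\times 2^\omega)\setminus\big(\mathsf{Fin}\times(2^\omega\setminus\mathcal{S})\big)$ of $2^\omega\times2^\omega$ is homeomorphic to a semifilter.
   Context: $\mathsf{Fin}=\{x\subseteq\omega: x\text{ finite}\}$. A semifilter (on $\omega$) is a collection $\mathcal{S}\subseteq\mathcal{P}(\omega)$ such that $\varnothing\notin\mathcal{S}$, $\omega\in\mathcal{S}$, $\mathcal{S}$ is closed under finite modifications (if $x\in\mathcal{S}$ and $y\subseteq\omega$ with $(x\setminus y)\cup(y\setminus x)$ finite then $y\in\mathcal{S}$), and $\mathcal{S}$ is upward-closed. Subsets of $\mathcal{P}(\omega)$ are identified via characteristic functions with subspaces of $2^\omega$. *)

(* Defs.v *)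
(* The Cantor space 2^omega is represented as nat -> bool
   (characteristic functions of subsets of omega); subsets of a space are
   predicates. The (product) topology of 2^omega and 2^omega x 2^omega is
   given by its standard basic clopen neighbourhoods: two points are
   "m-close" when they agree on the first m coordinates (in each component). *)
From Stdlib Require Import Arith.

Definition cantor := nat -> bool.

Definition agree (m : nat) (x y : cantor) : Prop :=
  forall i, i < m -> x i = y i.

Definition agree2 (m : nat) (p q : cantor * cantor) : Prop :=
  agree m (fst p) (fst q) /\ agree m (snd p) (snd q).

Definition cont_on {T U : Type} (agT : nat -> T -> T -> Prop)
    (agU : nat -> U -> U -> Prop) (X : T -> Prop) (f : T -> U) : Prop :=
  forall x, X x -> forall n, exists m, forall y, X y -> agT m x y ->
    agU n (f x) (f y).

Definition homeomorphic {T U : Type} (agT : nat -> T -> T -> Prop)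
    (agU : nat -> U -> U -> Prop) (X : T -> Prop) (Y : U -> Prop) : Prop :=
  exists (f : T -> U) (g : U -> T),
    (forall x, X x -> Y (f x)) /\ (forall y, Y y -> X (g y)) /\
    (forall x, X x -> g (f x) = x) /\ (forall y, Y y -> f (g y) = y) /\
    cont_on agT agU X f /\ cont_on agU agT Y g.

Definition Fin (x : cantor) : Prop := exists N, forall i, N <= i -> x i = false.

Definition fin_mod (x y : cantor) : Prop := exists N, forall i, N <= i -> x i = y i.

Definition subset (x y : cantor) : Prop := forall i, x i = true -> y i = true.

Definition semifilter (S : cantor -> Prop) : Prop :=
  ~ S (fun _ => false) /\
  S (fun _ => true) /\
  (forall x y, S x -> fin_mod x y -> S y) /\
  (forall x y, S x -> subset x y -> S y).

(* Main.v *)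
Require Import Defs.
From Stdlib Require Import Arith Lia Classical FunctionalExtensionality.

Definition ev (z : cantor) : cantor := fun i => z (2*i).
Definition od (z : cantor) : cantor := fun i => z (2*i+1).
Definition mix (p : cantor * cantor) : cantor :=
  fun n => if Nat.even n then fst p (Nat.div2 n) else snd p (Nat.div2 n).

Lemma even2 i : Nat.even (2*i) = true.
Proof. apply Nat.even_spec. exists i. lia. Qed.
Lemma even21 i : Nat.even (2*i+1) = false.
Proof. rewrite <- Nat.negb_odd. rewrite Nat.odd_odd. reflexivity. Qed.
Lemma div22 i : Nat.div2 (2*i) = i.
Proof. apply Nat.div2_double. Qed.
Lemma div221 i : Nat.div2 (2*i+1) = i.
Proof. replace (2*i+1) with (S (2*i)) by lia. apply Nat.div2_succ_double. Qed.

Lemma ev_mix p : ev (mix p) = fst p.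
Proof. extensionality i. unfold ev, mix. rewrite even2, div22. reflexivity. Qed.
Lemma od_mix p : od (mix p) = snd p.
Proof. extensionality i. unfold od, mix. rewrite even21, div221. reflexivity. Qed.
Lemma mix_evod z : mix (ev z, od z) = z.
Proof.
  extensionality n. unfold mix, ev, od; simpl.
  pose proof (Nat.div2_odd n) as H.
  rewrite <- Nat.negb_odd. destruct (Nat.odd n); simpl in *; f_equal; lia.
Qed.

Theorem lemma8p3 (S : cantor -> Prop) (hS : semifilter S) :
  exists S' : cantor -> Prop, semifilter S' /\
    homeomorphic agree2 agree
      (fun p : cantor * cantor => ~ (Fin (fst p) /\ ~ S (snd p)))
      S'.
Proof.
  destruct hS as [H0 [H1 [H2 H3]]].
  exists (fun z => ~ (Fin (ev z) /\ ~ S (od z))).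
  split.
  - split; [|split; [|split]].
    + intros C. apply C. split.
      * exists 0. intros; reflexivity.
      * exact H0.
    + intros [_ C]. apply C. exact H1.
    + intros x y Hx [N HN] [[M HM] Hy]. apply Hx. split.
      * exists (M + N). intros i Hi. unfold ev. rewrite HN by lia. apply HM. lia.
      * intros Sx. apply Hy. apply (H2 (od x)); auto.
        exists N. intros i Hi. unfold od. apply HN. lia.
    + intros x y Hx Hsub [[M HM] Hy]. apply Hx. split.
      * exists M. intros i Hi. unfold ev.
        destruct (x (2*i)) eqn:E; auto. apply Hsub in E.
        specialize (HM i Hi). unfold ev in HM. congruence.
      * intros Sx. apply Hy. apply (H3 (od x)); auto.
        intros i. apply Hsub.
  - exists mix, (fun z => (ev z, od z)).
    split; [|split; [|split; [|split; [|split]]]].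
    + intros p Hp. rewrite ev_mix, od_mix. exact Hp.
    + intros y Hy. exact Hy.
    + intros [a b] _. simpl.
      pose proof (ev_mix (a,b)). pose proof (od_mix (a,b)). simpl in *.
      congruence.
    + intros y _. apply mix_evod.
    + intros x _ n. exists n. intros y _ [Ha Hb] i Hi. unfold mix.
      pose proof (Nat.le_div2_diag_l i).
      destruct (Nat.even i).
      * apply Ha. lia.
      * apply Hb. lia.
    + intros x _ n. exists (2*n+1). intros y _ Hxy. split; simpl; intros i Hi;
      unfold ev, od; apply Hxy; lia.
Qed.
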